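(* Let $p,q$ be relatively prime non-zero integers with $q>0$, let $\mu>0$ be an integer, and write $(2\mu-1)q=np+r$ and $(\mu-1)q=kp+t$ with $n,k\in\mathbb Z$ and $r,t\in\{0,\dots,|p|-1\}$. If $r>0$ then $$\sum_{|s|<\mu}\varphi_{[i]}(s)=\begin{cases}\left\lfloor\frac{(2\mu-1)q}{|p|}\right\rfloor+1 & \text{if } i\equiv p-t+j\pmod p\text{ for some } j\in\{0,\dots,r-1\},\\ \left\lfloor\frac{(2\mu-1)q}{|p|}\right\rfloor & \text{otherwise.}\end{cases}$$ If $r=0$ then $\sum_{|s|<\mu}\varphi_{[i]}(s)=\left\lfloor\frac{(2\mu-1)q}{|p|}\right\rfloor$ for all $[i]\in\mathbb Z/p\mathbb Z$.
   Context: For relatively prime non-zero integers $p,q$ and $i\in\mathbb Z$, $\varphi_{[i]}(s)$ denotes the cardinality of $\{n\in\mathbb Z:\lfloor\frac{i+pn}{q}\rfloor=s\}$; it depends only on the class $[i]$ of $i$ mod $p$. *)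

(* Defs.v *)
From mathcomp Require Import all_boot all_order all_algebra.
From mathcomp Require Import finmap.
From mathcomp Require Import boolp classical_sets cardinality.
Set Implicit Arguments. Unset Strict Implicit. Unset Printing Implicit Defensive.
Import Order.TTheory GRing.Theory Num.Theory.
Local Open Scope ring_scope.
Local Open Scope classical_set_scope.

(* phi p q i s = #{ n in Z | floor((i + p n)/q) = s }.
   For q > 0, (x %/ q)%Z is the floor of x/q.  The set is finite for
   p <> 0, q > 0, so fset_set gives its actual cardinality. *)
Definition phi (p q i s : int) : nat :=
  #|` fset_set [set n : int | ((i + p * n) %/ q)%Z = s] |%fset.

(* Main.v *)
Require Import Defs.
From mathcomp Require Import all_boot all_order all_algebra.
From mathcomp Require Import finmap.
From mathcomp Require Import boolp classical_sets cardinality.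
From mathcomp Require Import zify.
Import Order.TTheory GRing.Theory Num.Theory.
Local Open Scope ring_scope.

Definition cnt (p i lo : int) (len : nat) : nat :=
  count (fun j : nat => (p %| lo + j%:Z - i)%Z) (iota 0 len).

Lemma cnt_add p i lo a b : cnt p i lo (a + b) = (cnt p i lo a + cnt p i (lo + a%:Z) b)%N.
Proof.
rewrite /cnt iotaD count_cat add0n -[a]addn0 iotaDl count_map addn0; congr addn.
by apply: eq_count => j /=; rewrite PoszD addrA.
Qed.

Lemma cnt_block p i lo qn N :
  (\sum_(j < N) cnt p i (lo + j%:Z * qn%:Z) qn)%N = cnt p i lo (N * qn).
Proof.
elim: N => [|N IH]; first by rewrite big_ord0 /cnt.
rewrite big_ord_recr /= IH mulSnr cnt_add; congr (_ + _)%N; congr cnt; lia.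
Qed.

Lemma cnt_small p i lo len : p != 0 -> (len <= `|p|)%N ->
  cnt p i lo len = (`|((i - lo) %% p)%Z|%N < len)%N.
Proof.
move=> p0 lp.
have m0 := modz_ge0 (i - lo) p0.
rewrite /cnt (@eq_in_count _ _ (pred1 `|((i - lo) %% p)%Z|%N)).
  by rewrite count_uniq_mem ?iota_uniq // mem_iota.
move=> j; rewrite mem_iota add0n /= => jl.
have -> : (p %| lo + j%:Z - i)%Z = (j%:Z == i - lo %[mod p])%Z.
  by rewrite eqz_mod_dvd; congr (_ %| _)%Z; lia.
rewrite -modz_abs modz_small; last by apply/andP; split => //; lia.
apply/eqP/eqP; lia.
Qed.

Lemma cnt_mult p i lo m r : p != 0 -> (r <= `|p|)%N ->
  cnt p i lo (m * `|p| + r) = (m + (`|((i - lo) %% p)%Z|%N < r))%N.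
Proof.
move=> p0 rp.
have shift : forall lo' k, ((i - (lo' + (k * `|p|)%N%:Z)) %% p = (i - lo') %% p)%Z.
  move=> lo' k; apply/eqP; rewrite eqz_mod_dvd.
  have -> : i - (lo' + (k * `|p|)%N%:Z) - (i - lo') = - ((k * `|p|)%N%:Z) by lia.
  by rewrite dvdzE abszN /= dvdn_mull.
elim: m lo => [|m IH] lo; first by rewrite cnt_small.
rewrite mulSn -addnA cnt_add cnt_small //.
have -> : (`|((i - lo) %% p)%Z| < `|p|)%N.
  by have := ltz_mod (i-lo) p0; have := modz_ge0 (i-lo) p0; lia.
rewrite IH add1n; have := shift lo 1%N; rewrite mul1n => ->; done.
Qed.

Lemma phi_cnt p (qn : nat) i s : p != 0 -> (0 < qn)%N ->
  phi p qn%:Z i s = cnt p i (s * qn%:Z) qn.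
Proof.
move=> p0 q0.
have qz : qn%:Z != 0 by rewrite eqz_nat -lt0n.
pose P := fun j : nat => (p %| s * qn%:Z + j%:Z - i)%Z.
pose L := [seq j <- iota 0 qn | P j].
pose h := fun j : nat => ((s * qn%:Z + j%:Z - i) %/ p)%Z.
have hinj : {in L &, injective h}.
  move=> a b; rewrite !mem_filter => /andP[Pa _] /andP[Pb _] /(congr1 (fun x => x * p)).
  rewrite /h !divzK // => /addIr /addrI; by case.
rewrite /phi; have -> : ([set n : int | ((i + p * n) %/ qn%:Z)%Z = s] = [set` [fset x in map h L]%fset])%classic.
  rewrite predeqE => n /=; rewrite in_fset /=; split.
  - move=> hs; apply/mapP.
    have m0 := modz_ge0 (i + p * n) qz.
    have m1 := ltz_mod (i + p * n) qz.
    exists `|((i + p * n) %% qn%:Z)%Z|%N.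
      rewrite mem_filter mem_iota /= add0n; apply/andP; split.
        have E := divz_eq (i + p * n) qn%:Z; rewrite hs in E.
        rewrite /P; apply/dvdzP; exists n; rewrite gez0_abs //; rewrite mulrC; lia.
      by move: m0 m1; lia.
    rewrite /h gez0_abs //.
    have := divz_eq (i + p * n) qn%:Z; rewrite hs => E.
    have -> : s * qn%:Z + ((i + p * n) %% qn%:Z)%Z - i = p * n by lia.
    by rewrite mulKz.
  - case/mapP => j; rewrite mem_filter mem_iota /= add0n => /andP[Pj jq] ->.
    rewrite /h.
    have E := divzK Pj.
    have -> : i + p * ((s * qn%:Z + j%:Z - i) %/ p)%Z = s * qn%:Z + j%:Z.
      by rewrite mulrC E; lia.
    rewrite divzMDl // divz_small ?addr0 //.
rewrite set_fsetK card_fseq undup_id; last first.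
  by rewrite map_inj_in_uniq // filter_uniq // iota_uniq.
by rewrite size_map size_filter.
Qed.

Theorem lemma3p1 (p q : int) (mu : nat) (n k r t : int)
  (hp : p != 0) (hq : 0 < q) (hpq : coprimez p q) (hmu : (0 < mu)%N)
  (hn : (2 * mu%:Z - 1) * q = n * p + r) (hr : 0 <= r < `|p|)
  (hk : (mu%:Z - 1) * q = k * p + t) (ht : 0 <= t < `|p|) (i : int) :
  let S := (\sum_(j < (2 * mu).-1) phi p q i (j%:Z - (mu%:Z - 1)))%N in
  let F := (((2 * mu%:Z - 1) * q) %/ `|p|)%Z in
  (0 < r ->
     (exists j : int, 0 <= j < r /\ (i = p - t + j %[mod p])%Z) ->
     S%:Z = F + 1) /\
  (0 < r ->
     ~ (exists j : int, 0 <= j < r /\ (i = p - t + j %[mod p])%Z) ->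
     S%:Z = F) /\
  (r = 0 -> S%:Z = F).
Proof.
case: q hq hn hk hpq => [qn|//] hq hn hk _ S F.
have qn0 : (0 < qn)%N by lia.
pose lo := - ((mu%:Z - 1) * qn%:Z).
have hS : S = cnt p i lo ((2 * mu).-1 * qn).
  rewrite /S -cnt_block; apply: eq_bigr => j _.
  by rewrite phi_cnt //; congr cnt; rewrite /lo mulrBl addrC.
pose L := ((2 * mu).-1 * qn)%N.
have hL : L%:Z = (2 * mu%:Z - 1) * qn%:Z.
  rewrite /L; move: hmu; clear; lia.
have pa : `|p|%:Z != 0 by rewrite eqz_nat absz_eq0.
have Lmod : (L%:Z %% `|p|%N)%Z = r.
  rewrite modz_abs hL hn modzMDl -modz_abs modz_small //.
have F0 : 0 <= F by rewrite /F divz_ge0 -?hL //; lia.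
have LE := divz_eq L%:Z `|p|%:Z.
rewrite Lmod hL -/F in LE.
have hLn : L = (`|F|%N * `|p| + `|r|%N)%N.
  move: LE F0 hr hL; clear; lia.
have x0 := modz_ge0 (i - lo) hp.
have x1 := ltz_mod (i - lo) hp.
have xE : ((i - lo) %% p = (i + t) %% p)%Z.
  apply/eqP; rewrite eqz_mod_dvd; apply/dvdzP; exists k; rewrite /lo.
  move: hk; clear; lia.
have key : (`|((i - lo) %% p)%Z| < `|r|)%N <->
    (exists j : int, 0 <= j < r /\ (i = p - t + j %[mod p])%Z).
  split.
  - move=> lt; exists ((i - lo) %% p)%Z; split; first by move: lt x0 hr; clear; lia.
    apply/eqP; rewrite eqz_mod_dvd; apply/dvdzP; exists (((i + t) %/ p)%Z - 1).
    have := divz_eq (i + t) p; rewrite -xE; clear; lia.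
  - move=> [j [jr /eqP]]; rewrite eqz_mod_dvd => /dvdzP [c hc].
    have : ((i - lo) %% p)%Z = j.
      rewrite xE; have -> : i + t = (c + 1) * p + j by move: hc; clear; lia.
      rewrite modzMDl -modz_abs modz_small //; move: jr hr; clear; lia.
    move: jr; clear; lia.
rewrite hS -/L hLn cnt_mult //; last by move: hr; clear; lia.
split; [|split].
- move=> _ /key ->; move: F0; clear; lia.
- move=> _ nex; have -> : (`|((i - lo) %% p)%Z| < `|r|)%N = false.
    by apply/negP => /key.
  move: F0; clear; lia.
- move=> r0; have -> : (`|((i - lo) %% p)%Z| < `|r|)%N = false by rewrite r0.
  move: F0; clear; lia.
Qed.
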